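(* Let $(x_n)$ be a nonincreasing sequence of positive reals that is interval-filling and whose cardinal function $f$ satisfies $\mathrm{rng}(f)=\{1,m\}$ for some integer $m\ge3$. Then $x_k\le\frac12 r_k$ for all $k\in\mathbb{N}$.
   Context: For a summable sequence $\mathbf{x}=(x_n)$ of positive reals, $\mathcal{A}(\mathbf{x})=\{\sum_{n\in A}x_n: A\subseteq\mathbb{N}\}$ is its achievement set and its cardinal function $f$ assigns to $x\in\mathcal{A}(\mathbf{x})$ the cardinality (a positive integer, $\omega$, or $\mathfrak{c}$) of $\{(\varepsilon_n)\in\{0,1\}^{\mathbb{N}}:\sum\varepsilon_nx_n=x\}$. The sequence is interval-filling if $\mathcal{A}(\mathbf{x})$ is an interval. The tail sums are $r_n=\sum_{k=n+1}^\infty x_k$. *)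

(* Defs.v *)
From Stdlib Require Import Reals List.
From Coquelicot Require Import Coquelicot.
Open Scope R_scope.

Definition subseq_term (x : nat -> R) (e : nat -> bool) (n : nat) : R :=
  if e n then x n else 0.

Definition reps (x : nat -> R) (s : R) : (nat -> bool) -> Prop :=
  fun e => is_series (subseq_term x e) s.

Definition achievement (x : nat -> R) (s : R) : Prop :=
  exists e : nat -> bool, reps x s e.

Definition has_card {T : Type} (S : T -> Prop) (n : nat) : Prop :=
  exists l : list T, NoDup l /\ length l = n /\ (forall t, S t <-> In t l).

Definition interval_filling (x : nat -> R) : Prop :=
  forall a b c, achievement x a -> achievement x b -> a <= c <= b ->
    achievement x c.

(* rng(f) = {1, m}, with f the cardinal function *)
Definition card_fun_range_1_m (x : nat -> R) (m : nat) : Prop :=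
  (forall s, achievement x s -> has_card (reps x s) 1 \/ has_card (reps x s) m) /\
  (exists s, achievement x s /\ has_card (reps x s) 1) /\
  (exists s, achievement x s /\ has_card (reps x s) m).

Definition tailsum (x : nat -> R) (n : nat) : R :=
  Series (fun j => x (n + 1 + j)%nat).

(* Main.v *)
Require Import Defs.
From Stdlib Require Import Reals List Lra Lia Arith FunctionalExtensionality Classical.
From Coquelicot Require Import Coquelicot.
Open Scope R_scope.

Lemma zero_series : is_series (fun _ : nat => 0) 0.
Proof.
  unfold is_series. apply filterlim_ext with (fun _ => 0).
  - intros n. rewrite sum_n_const. simpl. ring.
  - apply filterlim_const.
Qed.

Lemma delta_series (j : nat) (c : R) :
  is_series (fun n => if Nat.eqb n j then c else 0) c.
Proof.
  apply (is_series_decr_n _ (S j)). lia.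
  simpl pred.
  assert (H: sum_n (fun n => if Nat.eqb n j then c else 0) j = c).
  { assert (G: forall N, (N < j)%nat -> sum_n (fun n => if Nat.eqb n j then c else 0) N = 0).
    { induction N; intros HN.
      - rewrite sum_O. destruct (Nat.eqb_spec 0 j); [lia|reflexivity].
      - rewrite sum_Sn, IHN by lia. destruct (Nat.eqb_spec (S N) j); [lia|].
        change (0 + 0 = 0). ring. }
    destruct j.
    - rewrite sum_O. reflexivity.
    - rewrite sum_Sn, G by lia. rewrite Nat.eqb_refl. change (0 + c = c). ring. }
  match goal with |- context [sum_n ?f j] => replace (sum_n f j) with c by (symmetry; exact H) end.
  apply is_series_ext with (fun _ => 0).
  - intros n. destruct (Nat.eqb_spec (S j + n) j); [lia|reflexivity].
  - match goal with |- is_series _ ?l => replace l with 0 end. exact zero_series.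
    change (0 = c + - c). ring.
Qed.

Lemma ser_le a b la lb : (forall n, 0 <= a n <= b n) -> is_series a la -> is_series b lb -> la <= lb.
Proof.
  intros H Ha Hb. rewrite <- (is_series_unique _ _ Ha), <- (is_series_unique _ _ Hb).
  apply Series_le; auto. exists lb; auto.
Qed.

Lemma ser_nonneg a la : (forall n, 0 <= a n) -> is_series a la -> 0 <= la.
Proof.
  intros H Ha. apply (ser_le (fun _ => 0) a); auto. intros n; split; [lra|auto].
  apply zero_series.
Qed.

Lemma ser_plus a b la lb : is_series a la -> is_series b lb -> is_series (fun n => a n + b n) (la + lb).
Proof. intros Ha Hb. exact (is_series_plus _ _ _ _ Ha Hb). Qed.
Lemma ser_minus a b la lb : is_series a la -> is_series b lb -> is_series (fun n => a n - b n) (la - lb).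
Proof. intros Ha Hb. exact (is_series_minus _ _ _ _ Ha Hb). Qed.

Definition sing (j : nat) : nat -> bool := fun i => Nat.eqb i j.
Definition addj (j : nat) (e : nat -> bool) : nat -> bool := fun i => orb (Nat.eqb i j) (e i).
Definition remj (j : nat) (e : nat -> bool) : nat -> bool := fun i => andb (negb (Nat.eqb i j)) (e i).
Definition compl (k : nat) (e : nat -> bool) : nat -> bool := fun i => andb (Nat.ltb k i) (negb (e i)).
Definition tailind (x : nat -> R) (k : nat) : nat -> R := fun n => if Nat.ltb k n then x n else 0.
Definition avoid (k : nat) (e : nat -> bool) : Prop := forall i, (i <= k)%nat -> e i = false.

Section S.
Variable x : nat -> R.
Hypothesis xpos : forall n, 0 < x n.

Lemma reps_zero : reps x 0 (fun _ => false).
Proof. unfold reps. apply is_series_ext with (fun _ => 0). intros; reflexivity. exact zero_series. Qed.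

Lemma reps_sing j : reps x (x j) (sing j).
Proof.
  unfold reps. apply is_series_ext with (fun n => if Nat.eqb n j then x j else 0).
  - intros n. unfold subseq_term, sing. destruct (Nat.eqb_spec n j); subst; reflexivity.
  - apply delta_series.
Qed.

Lemma reps_add j e s : e j = false -> reps x s e -> reps x (s + x j) (addj j e).
Proof.
  intros Hj H. unfold reps in *.
  apply is_series_ext with (fun n => subseq_term x e n + (if Nat.eqb n j then x j else 0)).
  - intros n. unfold subseq_term, addj. destruct (Nat.eqb_spec n j); subst.
    + rewrite Hj. simpl. ring.
    + simpl. ring.
  - apply ser_plus; auto. apply delta_series.
Qed.

Lemma reps_rem j e s : e j = true -> reps x s e -> reps x (s - x j) (remj j e).
Proof.
  intros Hj H. unfold reps in *.
  apply is_series_ext with (fun n => subseq_term x e n - (if Nat.eqb n j then x j else 0)).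
  - intros n. unfold subseq_term, remj. destruct (Nat.eqb_spec n j); subst.
    + rewrite Hj. simpl. ring.
    + simpl. ring.
  - apply ser_minus; auto. apply delta_series.
Qed.

Lemma st_nonneg e n : 0 <= subseq_term x e n.
Proof. unfold subseq_term. destruct (e n); [left; apply xpos | lra]. Qed.

Lemma reps_nonneg e s : reps x s e -> 0 <= s.
Proof. intros H. apply (ser_nonneg _ _ (st_nonneg e) H). Qed.

Lemma reps_ge e s j : e j = true -> reps x s e -> x j <= s.
Proof. intros Hj H. pose proof (reps_nonneg _ _ (reps_rem _ _ _ Hj H)). lra. Qed.

Lemma reps_ge2 e s i j : e i = true -> e j = true -> i <> j -> reps x s e -> x i + x j <= s.
Proof.
  intros Hi Hj Hij H. pose proof (reps_rem _ _ _ Hi H) as H1.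
  assert (remj i e j = true). { unfold remj. rewrite Hj. destruct (Nat.eqb_spec j i); [lia|reflexivity]. }
  pose proof (reps_ge _ _ _ H0 H1). lra.
Qed.

Lemma reps_uniq_val e s s' : reps x s e -> reps x s' e -> s = s'.
Proof. intros H H'. rewrite <- (is_series_unique _ _ H), <- (is_series_unique _ _ H'). reflexivity. Qed.

Hypothesis xser : ex_series x.

Lemma tail_series k : is_series (tailind x k) (tailsum x k).
Proof.
  apply (is_series_decr_n _ (S k)). lia. simpl pred.
  assert (H: sum_n (tailind x k) k = 0).
  { assert (G: forall N, (N <= k)%nat -> sum_n (tailind x k) N = 0).
    { induction N; intros HN.
      - rewrite sum_O. unfold tailind. destruct (Nat.ltb_spec k 0); [lia|reflexivity].
      - rewrite sum_Sn, IHN by lia. unfold tailind. destruct (Nat.ltb_spec k (S N)); [lia|].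
        change (0 + 0 = 0). ring. }
    apply G; lia. }
  apply is_series_ext with (fun j => x (k + 1 + j)%nat).
  - intros n. unfold tailind. destruct (Nat.ltb_spec k (S k + n)); [|lia]. f_equal. lia.
  - match goal with |- is_series _ ?l => replace l with (tailsum x k) end.
    + unfold tailsum. apply Series_correct. apply (ex_series_incr_n x (k+1)) in xser. exact xser.
    + change (tailsum x k = tailsum x k + - sum_n (tailind x k) k). rewrite H. ring.
Qed.

Lemma reps_le_tail k e s : avoid k e -> reps x s e -> s <= tailsum x k.
Proof.
  intros Ha H. apply (ser_le (subseq_term x e) (tailind x k)); auto.
  - intros n. split. apply st_nonneg. unfold subseq_term, tailind.
    destruct (Nat.ltb_spec k n).
    + destruct (e n); [lra| left; apply xpos].
    + rewrite Ha by lia. lra.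
  - apply tail_series.
Qed.

Lemma reps_compl k e s : avoid k e -> reps x s e -> reps x (tailsum x k - s) (compl k e).
Proof.
  intros Ha H. unfold reps.
  apply is_series_ext with (fun n => tailind x k n - subseq_term x e n).
  - intros n. unfold subseq_term, tailind, compl. destruct (Nat.ltb_spec k n).
    + destruct (e n); simpl; ring.
    + rewrite Ha by lia. simpl. ring.
  - apply ser_minus; auto. apply tail_series.
Qed.

Lemma compl_avoid k e : avoid k (compl k e).
Proof. intros i Hi. unfold compl. destruct (Nat.ltb_spec k i); [lia|reflexivity]. Qed.

End S.

Lemma card_lower {T} (S : T -> Prop) n l : has_card S n -> NoDup l -> (forall t, In t l -> S t) -> (length l <= n)%nat.
Proof.
  intros [L [HL [HlL HS]]] Hl Hin. rewrite <- HlL. apply NoDup_incl_length; auto.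
  intros t Ht. apply HS. auto.
Qed.

Lemma card_upper {T U} (S : T -> Prop) n (g : T -> U) l' : has_card S n ->
  (forall a b, S a -> S b -> g a = g b -> a = b) -> (forall t, S t -> In (g t) l') -> (n <= length l')%nat.
Proof.
  intros [L [HL [HlL HS]]] Hinj Hin. rewrite <- HlL. rewrite <- (length_map g L).
  apply NoDup_incl_length.
  - apply NoDup_map_NoDup_ForallPairs; auto. intros a b Ha Hb. apply Hinj; apply HS; auto.
  - intros t Ht. apply in_map_iff in Ht. destruct Ht as [y [<- Hy]]. apply Hin, HS, Hy.
Qed.

Lemma card1_eq {T} (S : T -> Prop) a b : has_card S 1 -> S a -> S b -> a = b.
Proof.
  intros [L [HL [HlL HS]]] Ha Hb. destruct L as [|c [|d L]]; simpl in HlL; try lia.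
  apply HS in Ha, Hb. simpl in Ha, Hb. destruct Ha as [Ha|[]]; destruct Hb as [Hb|[]]. congruence.
Qed.

Lemma NoDup_map_on {A B} (f : A -> B) l : (forall a b, In a l -> In b l -> f a = f b -> a = b) -> NoDup l -> NoDup (map f l).
Proof. intros H Hl. apply NoDup_map_NoDup_ForallPairs; auto. Qed.

Lemma avoid_dec k e : avoid k e \/ exists i, (i <= k)%nat /\ e i = true.
Proof.
  induction k.
  - destruct (e 0%nat) eqn:E. right. exists 0%nat. auto. left. intros i Hi. replace i with 0%nat by lia. auto.
  - destruct IHk as [H|[i [Hi Hei]]].
    + destruct (e (S k)) eqn:E. right. exists (S k). auto.
      left. intros i Hi. destruct (Nat.eq_dec i (S k)); subst; auto. apply H; lia.
    + right. exists i. split; auto.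
Qed.
Section Main.
Variable x : nat -> R.
Variable m : nat.
Hypothesis xpos : forall n, 0 < x n.
Hypothesis xdec : forall n, x (S n) <= x n.
Hypothesis xser : ex_series x.
Hypothesis Hif : interval_filling x.
Hypothesis Hm : (3 <= m)%nat.
Hypothesis Hc : forall s, achievement x s -> has_card (reps x s) 1 \/ has_card (reps x s) m.
Variable k : nat.
Hypothesis Hgt : / 2 * tailsum x k < x k.

Let a := x k.
Let r := tailsum x k.

Lemma r2a : r < 2 * a.
Proof. unfold r, a. lra. Qed.

Lemma Hdec : forall i j, (i <= j)%nat -> x j <= x i.
Proof.
  intros i j H. induction H. lra. specialize (xdec m0). lra.
Qed.

Lemma Hge : forall i, (i <= k)%nat -> a <= x i.
Proof. intros. apply Hdec. auto. Qed.

Lemma Hach : forall s, 0 <= s <= a -> achievement x s.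
Proof.
  intros s Hs. apply (Hif 0 a s). exists (fun _ => false). apply reps_zero; auto.
  exists (sing k). apply reps_sing. lra.
Qed.

Lemma Hsmall : forall s e, reps x s e -> s < a -> avoid k e.
Proof.
  intros s e H Hs i Hi. destruct (e i) eqn:E; auto.
  pose proof (reps_ge x xpos _ _ _ E H). pose proof (Hge i Hi). lra.
Qed.

Lemma Har : a <= r.
Proof.
  destruct (Rle_or_lt a r) as [h|h]; auto. exfalso.
  assert (0 <= r). { pose proof (tail_series x xser k).
    apply (ser_nonneg (tailind x k)); auto. intros n; unfold tailind. destruct (Nat.ltb k n); [left; auto|lra]. }
  destruct (Hach ((a + r)/2)) as [e He]. lra.
  assert (avoid k e) by (apply (Hsmall _ _ He); lra).
  pose proof (reps_le_tail x xpos xser k e _ H0 He). fold r in H1. lra.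
Qed.

Definition copies := filter (fun j => if Req_EM_T (x j) a then true else false) (seq 0 (S k)).

Lemma copies_in j : In j copies <-> (j <= k)%nat /\ x j = a.
Proof.
  unfold copies. rewrite filter_In, in_seq. destruct (Req_EM_T (x j) a); split; intros; intuition; try lia; discriminate.
Qed.

Lemma copies_nodup : NoDup copies.
Proof. apply NoDup_filter, seq_NoDup. Qed.

Lemma k_in : In k copies.
Proof. apply copies_in. split; [lia|reflexivity]. Qed.

Lemma reps_ra : exists e, reps x (r - a) e.
Proof. apply Hach. pose proof Har; pose proof r2a. lra. Qed.

Lemma reps_val e s s' : reps x s e -> s = s' -> reps x s' e.
Proof. intros H ->. auto. Qed.

Lemma stepA n : has_card (reps x a) n -> (length copies + 1 <= n)%nat.
Proof.
  intros Hn. destruct reps_ra as [e He].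
  assert (Hav : avoid k e) by (apply (Hsmall _ _ He); pose proof Har; pose proof r2a; lra).
  replace (length copies + 1)%nat with (length (compl k e :: map sing copies)) by (simpl; rewrite length_map; lia).
  apply (card_lower _ _ _ Hn).
  - constructor.
    + intros Hin. apply in_map_iff in Hin. destruct Hin as [j [Hj Hjc]].
      apply copies_in in Hjc. assert (compl k e j = sing j j) by (rewrite Hj; auto).
      unfold compl, sing in H. rewrite Nat.eqb_refl in H. destruct (Nat.ltb_spec k j); [lia|discriminate].
    + apply NoDup_map_on; [|apply copies_nodup]. intros i j _ _ H.
      assert (sing i i = sing j i) by (rewrite H; auto). unfold sing in H0. rewrite Nat.eqb_refl in H0.
      symmetry in H0. apply Nat.eqb_eq in H0. auto.
  - intros t [<-|Ht].
    + apply (reps_val _ _ _ (reps_compl x xser k e _ Hav He)). fold r. ring.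
    + apply in_map_iff in Ht. destruct Ht as [j [<- Hj]]. apply copies_in in Hj.
      destruct Hj as [_ Hj]. rewrite <- Hj. apply reps_sing.
Qed.

Lemma compl_compl e : avoid k e -> compl k (compl k e) = e.
Proof.
  intros H. apply functional_extensionality. intros i. unfold compl.
  destruct (Nat.ltb_spec k i). simpl. destruct (e i); auto. simpl. rewrite H; auto.
Qed.

Lemma compl_inj e1 e2 : avoid k e1 -> avoid k e2 -> compl k e1 = compl k e2 -> e1 = e2.
Proof. intros H1 H2 H. rewrite <- (compl_compl e1), <- (compl_compl e2), H; auto. Qed.

Lemma ra_card1 : has_card (reps x (r - a)) 1.
Proof.
  destruct reps_ra as [e0 He0].
  destruct (Hc (r - a) (ex_intro _ e0 He0)) as [H|H]; auto. exfalso.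
  destruct H as [L [HL [HlL HS]]].
  assert (Hav : forall e, In e L -> avoid k e).
  { intros e He. apply HS in He. apply (Hsmall _ _ He). pose proof Har; pose proof r2a. lra. }
  destruct (Hc a (ex_intro _ (sing k) (reps_sing x k))) as [Ha|Ha].
  - pose proof (stepA _ Ha). pose proof k_in. destruct copies; simpl in *; [contradiction|lia].
  - assert (length (sing k :: map (compl k) L) <= m)%nat.
    { apply (card_lower _ _ _ Ha).
      - constructor.
        + intros Hin. apply in_map_iff in Hin. destruct Hin as [e [He _]].
          assert (compl k e k = sing k k) by (rewrite He; auto).
          unfold compl, sing in H. rewrite Nat.eqb_refl, Nat.ltb_irrefl in H. discriminate.
        + apply NoDup_map_on; auto. intros e1 e2 H1 H2 H. apply compl_inj; auto.
      - intros t [<-|Ht]. apply reps_sing.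
        apply in_map_iff in Ht. destruct Ht as [e [<- He]].
        apply (reps_val _ _ _ (reps_compl x xser k e _ (Hav e He) (proj2 (HS e) He))). fold r. ring. }
    simpl in H. rewrite length_map in H. lia.
Qed.

Lemma neq_at (f g : nat -> bool) i : f i <> g i -> f <> g.
Proof. intros H E. apply H. rewrite E. reflexivity. Qed.

Lemma a_cardm : has_card (reps x a) m.
Proof.
  destruct (Hc a (ex_intro _ (sing k) (reps_sing x k))) as [Ha|Ha]; auto.
  pose proof (stepA _ Ha). pose proof k_in. destruct copies; simpl in *; [contradiction|lia].
Qed.

Lemma sing_of e j : reps x a e -> e j = true -> (j <= k)%nat -> e = sing j.
Proof.
  intros H Hj Hjk. apply functional_extensionality. intros i. unfold sing.
  destruct (Nat.eqb_spec i j); subst; auto.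
  destruct (e i) eqn:E; auto. exfalso.
  pose proof (reps_ge2 x xpos e a i j E Hj n H). pose proof (Hge j Hjk). specialize (xpos i). lra.
Qed.

Lemma stepB : (m <= length copies + 1)%nat.
Proof.
  pose proof ra_card1 as H1.
  replace (length copies + 1)%nat with (length (None :: map Some copies)) by (simpl; rewrite length_map; lia).
  apply (card_upper (reps x a) m (fun e => find e (seq 0 (S k))) _ a_cardm).
  - intros e1 e2 He1 He2 Hg. cbv beta in Hg. destruct (find e1 (seq 0 (S k))) as [j|] eqn:F1.
    + symmetry in Hg. apply find_some in F1, Hg. rewrite in_seq in F1, Hg.
      rewrite (sing_of e1 j), (sing_of e2 j); auto; try lia; tauto.
    + symmetry in Hg. pose proof (find_none _ _ F1) as N1. pose proof (find_none _ _ Hg) as N2.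
      assert (A1 : avoid k e1) by (intros i Hi; apply N1; apply in_seq; lia).
      assert (A2 : avoid k e2) by (intros i Hi; apply N2; apply in_seq; lia).
      apply compl_inj; auto. apply (card1_eq _ _ _ H1).
      * apply (reps_val _ _ _ (reps_compl x xser k e1 _ A1 He1)). fold r. ring.
      * apply (reps_val _ _ _ (reps_compl x xser k e2 _ A2 He2)). fold r. ring.
  - intros t Ht. cbv beta. destruct (find t (seq 0 (S k))) as [j|] eqn:F; [apply in_cons|apply in_eq].
    apply in_map. apply find_some in F. destruct F as [Fj Ft]. apply in_seq in Fj.
    apply copies_in. split; [lia|]. pose proof (reps_ge x xpos _ _ _ Ft Ht). pose proof (Hge j). 
    assert (a <= x j) by (apply Hge; lia). lra.
Qed.

Lemma C1 : (exists j, (j <= k)%nat /\ a < x j /\ x j <= r) -> False.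
Proof.
  intros [j [Hjk [Hj1 Hj2]]]. pose proof stepB as SB. pose proof Har as HAR; pose proof r2a as R2A.
  destruct (Hach (x j - a)) as [e1 He1]. lra.
  destruct (Hach (r - x j)) as [e2 He2]. lra.
  assert (A1 : avoid k e1) by (apply (Hsmall _ _ He1); lra).
  assert (A2 : avoid k e2) by (apply (Hsmall _ _ He2); lra).
  set (l := sing j :: compl k e2 :: map (fun c => addj c e1) copies).
  assert (Hl : NoDup l).
  { constructor; [|constructor].
    - intros [Hin|Hin].
      + revert Hin. apply neq_at with j. unfold compl, sing. rewrite Nat.eqb_refl.
        destruct (Nat.ltb_spec k j); [lia|]. discriminate.
      + apply in_map_iff in Hin. destruct Hin as [c [Hc' Hcc]]. apply copies_in in Hcc.
        revert Hc'. apply neq_at with j. unfold addj, sing. rewrite Nat.eqb_refl, A1 by lia.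
        destruct (Nat.eqb_spec j c); [subst; lra|]. discriminate.
    - intros Hin. apply in_map_iff in Hin. destruct Hin as [c [Hc' Hcc]]. apply copies_in in Hcc.
      revert Hc'. apply neq_at with c. unfold addj, compl. rewrite Nat.eqb_refl.
      destruct (Nat.ltb_spec k c); [lia|]. discriminate.
    - apply NoDup_map_on; [|apply copies_nodup]. intros c1 c2 Hc1 Hc2 E.
      apply copies_in in Hc1. assert (EE : addj c1 e1 c1 = addj c2 e1 c1) by (rewrite E; auto).
      unfold addj in EE. rewrite Nat.eqb_refl, A1 in EE by lia. simpl in EE.
      destruct (Nat.eqb_spec c1 c2); auto. discriminate. }
  assert (Hr : forall t, In t l -> reps x (x j) t).
  { intros t [<-|[<-|Ht]].
    - apply reps_sing.
    - apply (reps_val _ _ _ (reps_compl x xser k e2 _ A2 He2)). fold r. ring.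
    - apply in_map_iff in Ht. destruct Ht as [c [<- Hcc]]. apply copies_in in Hcc.
      apply (reps_val _ _ _ (reps_add x c e1 _ (A1 c (proj1 Hcc)) He1)). rewrite (proj2 Hcc). unfold a. ring. }
  assert (Hlen : length l = (length copies + 2)%nat) by (unfold l; simpl; rewrite length_map; lia).
  destruct (Hc (x j) (ex_intro _ (sing j) (reps_sing x j))) as [H|H];
    pose proof (card_lower _ _ _ H Hl Hr) as HH; lia.
Qed.

Lemma eps_ex n : exists eps, 0 < eps /\ forall j, (j <= n)%nat -> r < x j -> r + eps < x j.
Proof.
  induction n.
  - destruct (Rlt_or_le r (x 0%nat)).
    + exists ((x 0%nat - r) / 2). split. lra. intros j Hj Hr. replace j with 0%nat by lia. lra.
    + exists 1. split. lra. intros j Hj Hr. replace j with 0%nat in Hr by lia. lra.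
  - destruct IHn as [eps [Heps H]]. destruct (Rlt_or_le r (x (S n))).
    + exists (Rmin eps ((x (S n) - r) / 2)). split. apply Rmin_glb_lt; lra.
      intros j Hj Hr. destruct (Nat.eq_dec j (S n)); subst.
      * pose proof (Rmin_r eps ((x (S n) - r) / 2)). lra.
      * pose proof (Rmin_l eps ((x (S n) - r) / 2)). specialize (H j ltac:(lia) Hr). lra.
    + exists eps. split; auto. intros j Hj Hr. destruct (Nat.eq_dec j (S n)); subst. lra. apply H; auto; lia.
Qed.

Lemma C2 : (forall j, (j <= k)%nat -> a < x j -> r < x j) -> False.
Proof.
  intros Hno. pose proof stepB as SB. pose proof Har as HAR; pose proof r2a as R2A.
  pose proof (stepA _ a_cardm) as SA.
  destruct (eps_ex k) as [eps [Heps Hx]].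
  set (u := r + Rmin eps (2 * a - r) / 2).
  assert (Hu1 : r < u). { unfold u. assert (0 < Rmin eps (2*a - r)) by (apply Rmin_glb_lt; lra). lra. }
  assert (Hu2 : u < 2 * a). { unfold u. pose proof (Rmin_r eps (2*a - r)). lra. }
  assert (Hu3 : forall j, (j <= k)%nat -> r < x j -> u < x j).
  { intros j Hj Hr. specialize (Hx j Hj Hr). unfold u. pose proof (Rmin_l eps (2*a - r)). pose proof (Rmin_glb_lt eps (2*a-r) 0). lra. }
  assert (Hcl : (2 <= length copies)%nat) by lia.
  pose proof copies_nodup as ND. pose proof (fun c => proj1 (copies_in c)) as CI.
  destruct copies as [|c1 [|c2 rest]] eqn:Ecop; simpl in Hcl; try lia.
  assert (Hc1 := CI c1 ltac:(simpl; auto)). assert (Hc2 := CI c2 ltac:(simpl; auto)).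
  assert (c12 : c1 <> c2). { inversion ND. intros ->. apply H1. simpl. auto. }
  destruct (Hach (u - a)) as [e0 He0]. lra.
  assert (Hadd : forall c e, (c <= k)%nat /\ x c = a -> reps x (u - a) e -> avoid k e -> reps x u (addj c e)).
  { intros c e [Hck Hca] He Ha. apply (reps_val _ _ _ (reps_add x c e _ (Ha c Hck) He)). rewrite Hca. ring. }
  assert (Hsm : forall e, reps x (u - a) e -> avoid k e) by (intros e He; apply (Hsmall _ _ He); lra).
  assert (Hachu : achievement x u) by (exists (addj c1 e0); apply Hadd; auto).
  assert (Hneq : forall e e', avoid k e -> avoid k e' -> addj c2 e <> addj c1 e').
  { intros e e' Ae Ae'. apply neq_at with c2. unfold addj. rewrite Nat.eqb_refl, (Ae' c2 (proj1 Hc2)).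
    destruct (Nat.eqb_spec c2 c1); [congruence|discriminate]. }
  destruct (Hc (u - a) (ex_intro _ e0 He0)) as [H1|Hm'].
  - destruct (Hc u Hachu) as [Hu|Hu].
    + assert (length (addj c2 e0 :: addj c1 e0 :: nil) <= 1)%nat.
      { apply (card_lower _ _ _ Hu).
        - constructor. intros [E|[]]. apply (Hneq e0 e0); auto. constructor. intros []. constructor.
        - intros t [<-|[<-|[]]]; apply Hadd; auto. }
      simpl in H; lia.
    + assert (m <= length (map (@Some nat) (c1 :: c2 :: rest)))%nat.
      { apply (card_upper (reps x u) m (fun e => find e (seq 0 (S k))) _ Hu).
        - intros t1 t2 Ht1 Ht2 Hg. cbv beta in Hg.
          destruct (find t1 (seq 0 (S k))) as [j|] eqn:F1.
          + symmetry in Hg. apply find_some in F1, Hg. rewrite in_seq in F1, Hg.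
            destruct F1 as [F1a F1b]. destruct Hg as [_ G1].
            assert (Hxj : x j = a).
            { pose proof (reps_ge x xpos _ _ _ F1b Ht1). assert (a <= x j) by (apply Hge; lia).
              destruct (Rle_lt_or_eq_dec a (x j) H0); auto.
              specialize (Hno j ltac:(lia) r0). specialize (Hu3 j ltac:(lia) Hno). lra. }
            assert (E : remj j t1 = remj j t2).
            { apply (card1_eq _ _ _ H1).
              - apply (reps_val _ _ _ (reps_rem x j t1 _ F1b Ht1)). rewrite Hxj. reflexivity.
              - apply (reps_val _ _ _ (reps_rem x j t2 _ G1 Ht2)). rewrite Hxj. reflexivity. }
            apply functional_extensionality. intros i.
            assert (EE : remj j t1 i = remj j t2 i) by (rewrite E; auto). unfold remj in EE.
            destruct (Nat.eqb_spec i j). subst. congruence. simpl in EE. auto.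
          + exfalso. pose proof (find_none _ _ F1) as N1.
            assert (A1 : avoid k t1) by (intros i Hi; apply N1; apply in_seq; lia).
            pose proof (reps_le_tail x xpos xser k t1 _ A1 Ht1). fold r in H. lra.
        - intros t Ht. cbv beta. destruct (find t (seq 0 (S k))) as [j|] eqn:F.
          + apply in_map. rewrite <- Ecop. apply copies_in. apply find_some in F.
            destruct F as [Fj Ft]. apply in_seq in Fj. split; [lia|].
            pose proof (reps_ge x xpos _ _ _ Ft Ht). assert (a <= x j) by (apply Hge; lia).
            destruct (Rle_lt_or_eq_dec a (x j) H0); auto.
            specialize (Hno j ltac:(lia) r0). specialize (Hu3 j ltac:(lia) Hno). lra.
          + exfalso. pose proof (find_none _ _ F) as N1.
            assert (A1 : avoid k t) by (intros i Hi; apply N1; apply in_seq; lia).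
            pose proof (reps_le_tail x xpos xser k t _ A1 Ht). fold r in H. lra. }
      rewrite length_map in H. simpl in H, SA. lia.
  - destruct Hm' as [L [NDL [HLL HSL]]].
    assert (HlB : forall n, has_card (reps x u) n -> (length (addj c2 e0 :: map (addj c1) L) <= n)%nat).
    { intros n Hn. apply (card_lower _ _ _ Hn).
      - constructor.
        + intros Hin. apply in_map_iff in Hin. destruct Hin as [e [E He]].
          apply (Hneq e0 e); auto. apply Hsm, HSL, He.
        + apply NoDup_map_on; auto. intros e e' He He' E.
          assert (Ae := Hsm e (proj2 (HSL e) He)). assert (Ae' := Hsm e' (proj2 (HSL e') He')).
          apply functional_extensionality. intros i.
          assert (EE : addj c1 e i = addj c1 e' i) by (rewrite E; auto). unfold addj in EE.
          destruct (Nat.eqb_spec i c1). subst. rewrite Ae, Ae' by lia. auto. simpl in EE. auto.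
      - intros t [<-|Ht]. apply Hadd; auto.
        apply in_map_iff in Ht. destruct Ht as [e [<- He]]. apply Hadd; auto. apply HSL; auto.
        apply Hsm, HSL, He. }
    simpl in HlB. rewrite length_map in HlB.
    destruct (Hc u Hachu) as [Hu|Hu]; specialize (HlB _ Hu); lia.
Qed.
End Main.

Theorem lemma3p3 (x : nat -> R) (m : nat) :
  (forall n, 0 < x n) ->
  (forall n, x (S n) <= x n) ->
  ex_series x ->
  interval_filling x ->
  (3 <= m)%nat ->
  card_fun_range_1_m x m ->
  forall k, x k <= / 2 * tailsum x k.
Proof.
  intros xpos xdec xser Hif Hm [Hc _] k.
  destruct (Rle_or_lt (x k) (/ 2 * tailsum x k)) as [h|Hgt]; auto. exfalso.
  destruct (Classical_Prop.classic (exists j, (j <= k)%nat /\ x k < x j /\ x j <= tailsum x k)) as [H|H].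
  - exact (C1 x m xpos xdec xser Hif Hm Hc k Hgt H).
  - apply (C2 x m xpos xdec xser Hif Hm Hc k Hgt).
    intros j Hj Hlt. destruct (Rlt_or_le (tailsum x k) (x j)) as [h|h]; auto.
    exfalso. apply H. exists j. auto.
Qed.
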